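(* Let $\Gamma$ be a gain operator on $\ell^\infty_+(\mathcal I)$ and $\hat\Gamma(s):=s\oplus\Gamma(s)$. The following are equivalent: (a) the system $\Sigma(\hat\Gamma)$ is UGS; (b) there exists a path $\sigma:\mathbb R_+\to\ell^\infty_+(\mathcal I)$ with $\sigma(r)\in\Psi(\Gamma)$ for all $r\ge0$, with $\varphi_{\min}(r)\mathbf 1\le\sigma(r)\le\varphi_{\max}(r)\mathbf 1$ for all $r\ge 0$ for some $\varphi_{\min},\varphi_{\max}\in\mathcal K_\infty$, and which is increasing; (c) there exists a path $\sigma:\mathbb R_+\to\ell^\infty_+(\mathcal I)$ with $\sigma(r)\in\Psi(\Gamma)$ for all $r\ge0$ and $\varphi_{\min}(r)\mathbf 1\le\sigma(r)\le\varphi_{\max}(r)\mathbf 1$ for all $r\ge0$ for some $\varphi_{\min},\varphi_{\max}\in\mathcal K_\infty$; (d) the set $\Psi(\Gamma)$ is uniformly cofinal.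
   Context: Let $\mathcal I$ be a nonempty countable index set. $\ell^\infty(\mathcal I)$ is the Banach space of real families $s=(s_i)_{i\in\mathcal I}$ with $\|s\|:=\sup_i|s_i|<\infty$, and $\ell^\infty_+(\mathcal I):=\{s:s_i\ge0\ \forall i\}$. $s^1\le s^2$ means $s^1_i\le s^2_i$ for all $i$; $\mathbf 1$ is the all-ones vector; $s^1\oplus s^2$ is the componentwise maximum. $\mathcal K$: continuous strictly increasing $\gamma:\mathbb R_+\to\mathbb R_+$ with $\gamma(0)=0$; $\mathcal K_\infty$: unbounded elements of $\mathcal K$. For $\mathcal J\subset\mathcal I$, $s_{|\mathcal J}$ agrees with $s$ on $\mathcal J$ and is $0$ elsewhere. Gain operator: for each $i$ a finite (possibly empty) $\mathcal I_i\subset\mathcal I\setminus\{i\}$; graph $\mathcal G$ with vertices $\mathcal I$ and edges $ji$, $j\in\mathcal I_i$; a pointwise equicontinuous family $\gamma_{ij}\in\mathcal K_\infty$ ($ji\in E(\mathcal G)$); functions $\mu_i:\ell^\infty_+(\mathcal I)\to[0,\infty]$ with (M1) some $\xi\in\mathcal K_\infty$ has $\mu_i(0)=0$, $\mu_i(s)\ge\xi(\|s\|)$; (M2) $\mu_i$ monotone w.r.t. $\le$; (M3) for each finite $\mathcal J$, $\mu_i$ restricted to vectors vanishing off $\mathcal J$ is finite-valued and continuous; (M4) for each norm-bounded $A$ and $\varepsilon>0$ there is $\delta>0$ with $\sup_i|\mu_i(s_{|\mathcal I_i})-\mu_i(s^0_{|\mathcal I_i})|\le\varepsilon$ whenever $s^0\in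 A$, $\|s-s^0\|\le\delta$. Then $\Gamma_i(s):=\mu_i([\gamma_{ij}(s_j)]_{j\in\mathcal I_i})$ (argument zero outside $\mathcal I_i$). For a monotone $T:\ell^\infty_+(\mathcal I)\to\ell^\infty_+(\mathcal I)$ with $T(0)=0$, $\Sigma(T)$ is the system $s^{n+1}=T(s^n)$; it is UGS if there is $\varphi\in\mathcal K_\infty$ with $\|T^n(s)\|\le\varphi(\|s\|)$ for all $s$, $n\ge0$. $\Psi(T):=\{s\in\ell^\infty_+(\mathcal I):T(s)\le s\}$. A set $A\subset\ell^\infty_+(\mathcal I)$ is uniformly cofinal if there is $\varphi\in\mathcal K_\infty$ such that every $s\in\ell^\infty_+(\mathcal I)$ has some $\hat s\in A$ with $s\le\hat s$ and $\|\hat s\|\le\varphi(\|s\|)$. A path $\sigma$ is increasing if $r_1\le r_2\Rightarrow\sigma(r_1)\le\sigma(r_2)$. *)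

(* Defs.v *)
From Stdlib Require Import Reals List ClassicalDescription.
From Coquelicot Require Import Coquelicot.
Open Scope R_scope.

Definition cont_on_Rplus (g : R -> R) : Prop :=
  forall r, 0 <= r -> forall eps, 0 < eps -> exists delta, 0 < delta /\
    forall r', 0 <= r' -> Rabs (r' - r) < delta -> Rabs (g r' - g r) < eps.

Definition class_K (g : R -> R) : Prop :=
  cont_on_Rplus g /\ g 0 = 0 /\
  (forall r1 r2, 0 <= r1 -> r1 < r2 -> g r1 < g r2).

Definition class_Kinf (g : R -> R) : Prop :=
  class_K g /\ (forall M, exists r, 0 <= r /\ M < g r).

Definition countable_index (I : Type) : Prop :=
  exists f : I -> nat, forall i j, f i = f j -> i = j.

(* ||s|| := sup_i |s_i| (the value is meaningful for bounded s) *)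
Definition linf_norm {I : Type} (s : I -> R) : R :=
  real (Lub_Rbar (fun x => exists i, x = Rabs (s i))).

Definition linf {I : Type} (s : I -> R) : Prop := exists C, forall i, Rabs (s i) <= C.
Definition linf_pos {I : Type} (s : I -> R) : Prop := (forall i, 0 <= s i) /\ linf s.

Definition vle {I : Type} (s1 s2 : I -> R) : Prop := forall i, s1 i <= s2 i.
Definition ones {I : Type} : I -> R := fun _ => 1.
Definition vzero {I : Type} : I -> R := fun _ => 0.
Definition vmax {I : Type} (s1 s2 : I -> R) : I -> R := fun i => Rmax (s1 i) (s2 i).
Definition vscale {I : Type} (c : R) (s : I -> R) : I -> R := fun i => c * s i.
Definition vsub {I : Type} (s1 s2 : I -> R) : I -> R := fun i => s1 i - s2 i.

Definition restrict {I : Type} (J : list I) (s : I -> R) : I -> R :=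
  fun j => if excluded_middle_informative (In j J) then s j else 0.

Definition vanishes_off {I : Type} (J : list I) (s : I -> R) : Prop :=
  forall j, ~ In j J -> s j = 0.

(* Data: Ii i = the finite set I_i (as a list), gamma i j = gamma_ij (used for
   j in I_i, i.e. edges ji), mu i = mu_i : l^infty_+ -> [0, +oo]. *)
Definition gain_operator_data {I : Type} (Ii : I -> list I)
    (gamma : I -> I -> R -> R) (mu : I -> (I -> R) -> Rbar) : Prop :=
  (forall i, ~ In i (Ii i)) /\
  (forall i j, In j (Ii i) -> class_Kinf (gamma i j)) /\
  (forall r, 0 <= r -> forall eps, 0 < eps -> exists delta, 0 < delta /\
     forall i j r', In j (Ii i) -> 0 <= r' -> Rabs (r' - r) < delta ->
       Rabs (gamma i j r' - gamma i j r) < eps) /\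
  (forall i s, linf_pos s -> Rbar_le (Finite 0) (mu i s)) /\
  (exists xi, class_Kinf xi /\
     forall i, mu i vzero = Finite 0 /\
       forall s, linf_pos s -> Rbar_le (Finite (xi (linf_norm s))) (mu i s)) /\
  (forall i s1 s2, linf_pos s1 -> linf_pos s2 -> vle s1 s2 ->
     Rbar_le (mu i s1) (mu i s2)) /\
  (* (M3) *)
  (forall i (J : list I),
     (forall s, linf_pos s -> vanishes_off J s -> is_finite (mu i s)) /\
     (forall s, linf_pos s -> vanishes_off J s ->
        forall eps, 0 < eps -> exists delta, 0 < delta /\
          forall s', linf_pos s' -> vanishes_off J s' ->
            linf_norm (vsub s' s) < delta ->
            Rabs (real (mu i s') - real (mu i s)) < eps)) /\
  (* (M4) *)
  (forall A : (I -> R) -> Prop,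
     (forall s, A s -> linf_pos s) ->
     (exists C, forall s, A s -> linf_norm s <= C) ->
     forall eps, 0 < eps -> exists delta, 0 < delta /\
       forall s0 s, A s0 -> linf_pos s -> linf_norm (vsub s s0) <= delta ->
         forall i, Rabs (real (mu i (restrict (Ii i) s))
                         - real (mu i (restrict (Ii i) s0))) <= eps).

(* Gamma_i(s) := mu_i([gamma_ij(s_j)]_{j in I_i}) (argument zero outside I_i);
   this value is finite by (M3). *)
Definition Gamma_op {I : Type} (Ii : I -> list I) (gamma : I -> I -> R -> R)
    (mu : I -> (I -> R) -> Rbar) (s : I -> R) : I -> R :=
  fun i => real (mu i (restrict (Ii i) (fun j => gamma i j (s j)))).

Definition Gamma_hat {I : Type} (Ii : I -> list I) (gamma : I -> I -> R -> R)
    (mu : I -> (I -> R) -> Rbar) (s : I -> R) : I -> R :=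
  vmax s (Gamma_op Ii gamma mu s).

Definition UGS {I : Type} (T : (I -> R) -> (I -> R)) : Prop :=
  exists phi, class_Kinf phi /\
    forall s, linf_pos s -> forall n : nat,
      linf_norm (Nat.iter n T s) <= phi (linf_norm s).

Definition Psi {I : Type} (T : (I -> R) -> (I -> R)) (s : I -> R) : Prop :=
  linf_pos s /\ vle (T s) s.

Definition uniformly_cofinal {I : Type} (A : (I -> R) -> Prop) : Prop :=
  exists phi, class_Kinf phi /\
    forall s, linf_pos s -> exists shat, A shat /\ vle s shat /\
      linf_norm shat <= phi (linf_norm s).

Definition increasing_path {I : Type} (sigma : R -> I -> R) : Prop :=
  forall r1 r2, 0 <= r1 -> r1 <= r2 -> vle (sigma r1) (sigma r2).

Definition bounded_decay_path {I : Type} (T : (I -> R) -> (I -> R))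
    (sigma : R -> I -> R) : Prop :=
  (forall r, 0 <= r -> Psi T (sigma r)) /\
  exists phimin phimax, class_Kinf phimin /\ class_Kinf phimax /\
    forall r, 0 <= r ->
      vle (vscale (phimin r) ones) (sigma r) /\ vle (sigma r) (vscale (phimax r) ones).

(* Main.v *)
Require Import Defs.
From Stdlib Require Import Reals List Lra Lia ClassicalDescription Classical FunctionalExtensionality IndefiniteDescription.
From Coquelicot Require Import Coquelicot.
Open Scope R_scope.

Lemma lub_props (E : R -> Prop) x0 C : E x0 -> (forall x, E x -> x <= C) ->
  (forall x, E x -> x <= real (Lub_Rbar E)) /\
  (forall b, (forall x, E x -> x <= b) -> real (Lub_Rbar E) <= b).
Proof.
  intros H0 HC. destruct (Lub_Rbar_correct E) as [Hub Hlub].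
  assert (HL : Rbar_le (Lub_Rbar E) C) by (apply Hlub; intros x Hx; simpl; auto).
  assert (HL0 := Hub x0 H0).
  destruct (Lub_Rbar E) as [l| |] eqn:El; simpl in *; try contradiction.
  split.
  - intros x Hx. exact (Hub x Hx).
  - intros b Hb. apply (Hlub (Finite b)). intros x Hx; simpl; auto.
Qed.

Lemma linf_norm_props {I : Type} (HI : inhabited I) (s : I -> R) C :
  (forall i, Rabs (s i) <= C) ->
  (forall i, Rabs (s i) <= linf_norm s) /\ linf_norm s <= C.
Proof.
  intros HC. destruct HI as [i0]. unfold linf_norm.
  destruct (lub_props (fun x => exists i, x = Rabs (s i)) (Rabs (s i0)) C)
    as [H1 H2].
  - eauto.
  - intros x [i ->]; auto.
  - split.
    + intros i; apply H1; eauto.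
    + apply H2. intros x [i ->]; auto.
Qed.

Lemma linf_norm_le {I : Type} (HI : inhabited I) (s : I -> R) C :
  (forall i, Rabs (s i) <= C) -> linf_norm s <= C.
Proof. intros H; apply (linf_norm_props HI s C H). Qed.

Lemma linf_norm_ge {I : Type} (HI : inhabited I) (s : I -> R) :
  linf s -> forall i, Rabs (s i) <= linf_norm s.
Proof. intros [C HC]; apply (linf_norm_props HI s C HC). Qed.

Lemma linf_norm_nonneg {I : Type} (HI : inhabited I) (s : I -> R) :
  linf s -> 0 <= linf_norm s.
Proof. intros H. destruct HI as [i0]. pose proof (linf_norm_ge (inhabits i0) s H i0).
  pose proof (Rabs_pos (s i0)). lra. Qed.

Lemma linf_norm_const {I : Type} (HI : inhabited I) r : 0 <= r ->
  linf_norm (vscale r (@ones I)) = r.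
Proof.
  intros Hr. assert (Ha : forall i, Rabs (vscale r (@ones I) i) = r).
  { intros i; unfold vscale, ones. rewrite Rmult_1_r. apply Rabs_pos_eq; auto. }
  apply Rle_antisym.
  - apply linf_norm_le; auto. intros i; rewrite Ha; lra.
  - destruct HI as [i0]. eapply Rle_trans; [|apply (linf_norm_ge (inhabits i0) _ ) with (i:=i0)].
    + rewrite Ha; lra.
    + exists r; intros i; rewrite Ha; lra.
Qed.

Lemma restrict_bounded {I : Type} (J : list I) (f : I -> R) :
  linf (restrict J f).
Proof.
  exists (fold_right (fun j acc => Rabs (f j) + acc) 0 J).
  assert (Hp : forall J, 0 <= fold_right (fun j acc => Rabs (f j) + acc) 0 J).
  { induction J0; simpl; [lra|]. pose proof (Rabs_pos (f a)); lra. }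
  intros i. unfold restrict. destruct (excluded_middle_informative (In i J)) as [Hin|Hn].
  - clear -Hin Hp. induction J; simpl in *; [contradiction|].
    destruct Hin as [->|Hin]. + specialize (Hp J); lra.
    + specialize (IHJ Hin). pose proof (Rabs_pos (f a)); lra.
  - rewrite Rabs_R0. apply Hp.
Qed.

Lemma finite_list_N {I : Type} (J : list I) (P : I -> nat -> Prop) :
  (forall j, In j J -> exists N, forall m, (N <= m)%nat -> P j m) ->
  exists N, forall j m, In j J -> (N <= m)%nat -> P j m.
Proof.
  induction J as [|a J IH]; intros H.
  - exists 0%nat; intros j m [].
  - destruct (H a (or_introl eq_refl)) as [Na Ha].
    destruct IH as [NJ HJ]. { intros j Hj; apply H; right; auto. }
    exists (Nat.max Na NJ). intros j m [<-|Hj] Hm.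
    + apply Ha; lia. + apply HJ; auto; lia.
Qed.

Lemma Kinf_nonneg g r : class_Kinf g -> 0 <= r -> 0 <= g r.
Proof. intros [[_ [H0 Hi]] _] Hr. destruct (Req_dec r 0) as [->|Hn]; [lra|].
  rewrite <- H0. left; apply Hi; lra. Qed.

Lemma Kinf_mono g r1 r2 : class_Kinf g -> 0 <= r1 -> r1 <= r2 -> g r1 <= g r2.
Proof. intros [[_ [_ Hi]] _] H1 H2. destruct (Req_dec r1 r2) as [->|Hn]; [lra|].
  left; apply Hi; lra. Qed.
Definition Yv {I : Type} (Ii : I -> list I) (gamma : I -> I -> R -> R) i (s : I -> R) :=
  restrict (Ii i) (fun j => gamma i j (s j)).

Lemma Y_pos {I : Type} Ii gamma mu (Hg : @gain_operator_data I Ii gamma mu) i s :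
  (forall j, 0 <= s j) -> linf_pos (Yv Ii gamma i s).
Proof.
  destruct Hg as [Hirr [HK _]]. intros Hs. split; [|apply restrict_bounded].
  intros j. unfold Yv, restrict. destruct (excluded_middle_informative _) as [Hin|]; [|lra].
  apply Kinf_nonneg; auto.
Qed.

Lemma Y_van {I : Type} Ii gamma i s : vanishes_off (Ii i) (@Yv I Ii gamma i s).
Proof. intros j Hj. unfold Yv, restrict. destruct (excluded_middle_informative _); tauto. Qed.

Lemma mu_Y_finite {I : Type} Ii gamma mu (Hg : @gain_operator_data I Ii gamma mu) i s :
  (forall j, 0 <= s j) -> mu i (Yv Ii gamma i s) = Finite (Gamma_op Ii gamma mu s i).
Proof.
  intros Hs. pose proof Hg as [_ [_ [_ [_ [_ [_ [HM3 _]]]]]]].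
  destruct (HM3 i (Ii i)) as [Hf _]. unfold Gamma_op. symmetry.
  apply (Hf _ (Y_pos Ii gamma mu Hg i s Hs) (Y_van Ii gamma i s)).
Qed.

Lemma G_nonneg {I : Type} Ii gamma mu (Hg : @gain_operator_data I Ii gamma mu) s i :
  (forall j, 0 <= s j) -> 0 <= Gamma_op Ii gamma mu s i.
Proof.
  intros Hs. pose proof Hg as [_ [_ [_ [Hm0 _]]]].
  pose proof (Hm0 i _ (Y_pos Ii gamma mu Hg i s Hs)) as H.
  rewrite (mu_Y_finite Ii gamma mu Hg i s Hs) in H. exact H.
Qed.

Lemma G_mono {I : Type} Ii gamma mu (Hg : @gain_operator_data I Ii gamma mu) s1 s2 :
  (forall j, 0 <= s1 j) -> vle s1 s2 -> vle (Gamma_op Ii gamma mu s1) (Gamma_op Ii gamma mu s2).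
Proof.
  intros H1 H12 i. assert (H2 : forall j, 0 <= s2 j) by (intros j; specialize (H1 j); specialize (H12 j); lra).
  pose proof Hg as [_ [HK [_ [_ [_ [HM2 _]]]]]].
  pose proof (HM2 i _ _ (Y_pos Ii gamma mu Hg i s1 H1) (Y_pos Ii gamma mu Hg i s2 H2)) as H.
  rewrite (mu_Y_finite Ii gamma mu Hg i s1 H1), (mu_Y_finite Ii gamma mu Hg i s2 H2) in H.
  apply H. intros j. unfold Yv, restrict. destruct (excluded_middle_informative _) as [Hin|]; [|lra].
  apply Kinf_mono; auto.
Qed.

Lemma Ghat_ge {I : Type} Ii gamma mu s : vle s (@Gamma_hat I Ii gamma mu s).
Proof. intros i; unfold Gamma_hat, vmax; apply Rmax_l. Qed.

Lemma Ghat_mono {I : Type} Ii gamma mu (Hg : @gain_operator_data I Ii gamma mu) s1 s2 :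
  (forall j, 0 <= s1 j) -> vle s1 s2 -> vle (Gamma_hat Ii gamma mu s1) (Gamma_hat Ii gamma mu s2).
Proof.
  intros H1 H12 i. unfold Gamma_hat, vmax. pose proof (G_mono Ii gamma mu Hg s1 s2 H1 H12 i).
  specialize (H12 i). apply Rmax_lub; [eapply Rle_trans; [apply H12|apply Rmax_l]
    |eapply Rle_trans; [apply H|apply Rmax_r]].
Qed.

Lemma iter_Ghat_ge {I : Type} Ii gamma mu s n : vle s (Nat.iter n (@Gamma_hat I Ii gamma mu) s).
Proof. induction n; intros i; simpl; [lra|]. eapply Rle_trans; [apply IHn|apply Ghat_ge]. Qed.

Lemma d_to_a {I : Type} (HI : inhabited I) Ii gamma mu (Hg : @gain_operator_data I Ii gamma mu) :
  uniformly_cofinal (Psi (Gamma_op Ii gamma mu)) -> UGS (Gamma_hat Ii gamma mu).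
Proof.
  intros [phi [Hphi Hcof]]. exists phi; split; auto.
  intros s Hs n. destruct (Hcof s Hs) as [sh [[Hshp Hdec] [Hle Hn]]].
  assert (Hb : forall n, vle (Nat.iter n (Gamma_hat Ii gamma mu) s) sh).
  { induction n0; simpl; auto. intros i. unfold Gamma_hat at 1, vmax.
    apply Rmax_lub; auto. eapply Rle_trans; [|apply (Hdec i)].
    apply G_mono; auto. intros j. pose proof (iter_Ghat_ge Ii gamma mu s n0 j).
    destruct Hs as [Hs0 _]. specialize (Hs0 j); lra. }
  eapply Rle_trans; [|exact Hn]. apply linf_norm_le; auto.
  intros i. pose proof (iter_Ghat_ge Ii gamma mu s n i). destruct Hs as [Hs0 _]. specialize (Hs0 i).
  rewrite Rabs_pos_eq by lra. eapply Rle_trans; [apply Hb|].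
  eapply Rle_trans; [apply Rle_abs|]. apply linf_norm_ge; auto. apply Hshp.
Qed.
Lemma Kinf_surj g t : class_Kinf g -> 0 <= t -> exists r, 0 <= r /\ g r = t.
Proof.
  intros Hg Ht. pose proof Hg as [[Hc [H0 Hi]] Hu].
  destruct (Hu t) as [R0 [HR0 HtR]].
  set (E := fun r => 0 <= r /\ g r <= t).
  assert (Hb : bound E).
  { exists R0. intros r [Hr Hgr]. destruct (Rle_dec r R0) as [|Hn]; auto.
    assert (g R0 < g r) by (apply Hi; lra). lra. }
  assert (He : exists x, E x) by (exists 0; split; lra).
  destruct (completeness E Hb He) as [m [Hub Hlub]].
  assert (Hm0 : 0 <= m) by (apply Hub; split; lra).
  exists m; split; auto.
  destruct (Rtotal_order (g m) t) as [Hlt|[Heq|Hgt]]; auto.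
  - exfalso. destruct (Hc m Hm0 (t - g m)) as [d [Hd Hcd]]; [lra|].
    assert (E (m + d/2)).
    { split; [lra|]. assert (Hx := Hcd (m + d/2) ltac:(lra) ltac:(rewrite Rabs_pos_eq; lra)).
      apply Rabs_def2 in Hx. lra. }
    assert (m + d/2 <= m) by (apply Hub; auto). lra.
  - exfalso. assert (Hmp : 0 < m).
    { destruct (Req_dec m 0) as [->|]; [rewrite H0 in Hgt; lra|lra]. }
    destruct (Hc m Hm0 (g m - t)) as [d [Hd Hcd]]; [lra|].
    assert (m <= m - Rmin (d/2) m); [|pose proof (Rmin_glb_lt (d/2) m 0); 
      assert (0 < Rmin (d/2) m) by (apply Rmin_glb_lt; lra); lra].
    apply Hlub. intros r [Hr Hgr]. destruct (Rle_dec r (m - Rmin (d/2) m)) as [|Hn]; auto.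
    exfalso. assert (r <= m) by (apply Hub; split; auto).
    pose proof (Rmin_l (d/2) m).
    assert (Hx := Hcd r Hr ltac:(rewrite Rabs_left1; lra)). apply Rabs_def2 in Hx. lra.
Qed.

Lemma Kinf_inj g r1 r2 : class_Kinf g -> 0 <= r1 -> 0 <= r2 -> g r1 = g r2 -> r1 = r2.
Proof.
  intros [[_ [_ Hi]] _] H1 H2 He. destruct (Rtotal_order r1 r2) as [Hl|[|Hl]]; auto.
  - specialize (Hi r1 r2 H1 Hl); lra. - specialize (Hi r2 r1 H2 Hl); lra.
Qed.

Lemma Kinf_inverse g : class_Kinf g -> exists h, class_Kinf h /\
  forall t, 0 <= t -> 0 <= h t /\ g (h t) = t.
Proof.
  intros Hg.
  assert (Hex : forall t, exists r, 0 <= t -> 0 <= r /\ g r = t).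
  { intros t. destruct (Rle_dec 0 t) as [Ht|Ht].
    - destruct (Kinf_surj g t Hg Ht) as [r Hr]; exists r; auto.
    - exists 0; intros; lra. }
  set (h := fun t => proj1_sig (constructive_indefinite_description _ (Hex t))).
  assert (Hh : forall t, 0 <= t -> 0 <= h t /\ g (h t) = t).
  { intros t Ht. unfold h. destruct (constructive_indefinite_description _ _); simpl; auto. }
  exists h; split; auto.
  pose proof Hg as [[Hc [H0 Hi]] Hu].
  assert (Hmono : forall t1 t2, 0 <= t1 -> t1 < t2 -> h t1 < h t2).
  { intros t1 t2 H1 H2. destruct (Hh t1 H1) as [a1 b1]. destruct (Hh t2 ltac:(lra)) as [a2 b2].
    destruct (Rlt_dec (h t1) (h t2)) as [|Hn]; auto. exfalso.
    assert (g (h t2) <= g (h t1)) by (apply Kinf_mono; auto; lra). lra. }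
  split; [split; [|split]|].
  - intros t0 Ht0 eps Heps. destruct (Hh t0 Ht0) as [Hr0 Hgr0]. set (r0 := h t0) in *. clearbody r0.
    assert (Hup : t0 < g (r0 + eps)) by (rewrite <- Hgr0; apply Hi; lra).
    assert (Hupper : forall t', 0 <= t' -> t' < g (r0 + eps) -> h t' < r0 + eps).
    { intros t' Ht' Hlt. destruct (Rlt_dec (h t') (r0 + eps)) as [|Hn]; auto. exfalso.
      destruct (Hh t' Ht') as [a b]. assert (g (r0 + eps) <= g (h t')) by (apply Kinf_mono; auto; lra). lra. }
    destruct (Rlt_dec r0 eps) as [Hsm|Hbig].
    + exists (g (r0 + eps) - t0); split; [lra|]. intros t' Ht' Hd.
      apply Rabs_def2 in Hd. destruct Hd as [Hd1 Hd2].
      pose proof (Hupper t' Ht' ltac:(lra)). destruct (Hh t' Ht') as [a b].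
      apply Rabs_def1; lra.
    + assert (Hlow : g (r0 - eps) < t0) by (rewrite <- Hgr0; apply Hi; lra).
      exists (Rmin (g (r0 + eps) - t0) (t0 - g (r0 - eps))); split.
      { apply Rmin_glb_lt; lra. }
      intros t' Ht' Hd. apply Rabs_def2 in Hd. destruct Hd as [Hd1 Hd2].
      pose proof (Rmin_l (g (r0 + eps) - t0) (t0 - g (r0 - eps))).
      pose proof (Rmin_r (g (r0 + eps) - t0) (t0 - g (r0 - eps))).
      pose proof (Hupper t' Ht' ltac:(lra)). destruct (Hh t' Ht') as [a b].
      assert (r0 - eps < h t').
      { destruct (Rlt_dec (r0 - eps) (h t')) as [|Hn]; auto. exfalso.
        assert (g (h t') <= g (r0 - eps)) by (apply Kinf_mono; auto; lra). lra. }
      apply Rabs_def1; lra.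
  - destruct (Hh 0 ltac:(lra)) as [a b]. apply (Kinf_inj g); auto; lra.
  - intros; apply Hmono; auto.
  - intros M. exists (g (Rmax M 0 + 1)). split.
    + apply Kinf_nonneg; auto. pose proof (Rmax_r M 0); lra.
    + assert (Hge : 0 <= g (Rmax M 0 + 1)) by (apply Kinf_nonneg; auto; pose proof (Rmax_r M 0); lra).
      destruct (Hh _ Hge) as [a b]. apply (Kinf_inj g) in b; auto.
      * rewrite b. pose proof (Rmax_l M 0); lra.
      * pose proof (Rmax_r M 0); lra.
Qed.

Lemma Kinf_comp f h : class_Kinf f -> class_Kinf h -> class_Kinf (fun t => f (h t)).
Proof.
  intros Hf Hh. pose proof Hf as [[Hcf [Hf0 Hfi]] Hfu]. pose proof Hh as [[Hch [Hh0 Hhi]] Hhu].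
  split; [split; [|split]|].
  - intros r Hr eps Heps. destruct (Hcf (h r) (Kinf_nonneg h r Hh Hr) eps Heps) as [d1 [Hd1 Hc1]].
    destruct (Hch r Hr d1 Hd1) as [d [Hd Hc]]. exists d; split; auto.
    intros r' Hr' Hrr. apply Hc1; auto. apply Kinf_nonneg; auto.
  - rewrite Hh0; auto.
  - intros r1 r2 H1 H2. apply Hfi; [apply Kinf_nonneg; auto|]. apply Hhi; auto.
  - intros M. destruct (Hfu M) as [r [Hr HM]]. destruct (Kinf_surj h r Hh Hr) as [t [Ht Htr]].
    exists t; split; auto. rewrite Htr; auto.
Qed.

Lemma c_to_d {I : Type} (HI : inhabited I) (G : (I -> R) -> I -> R) sigma :
  bounded_decay_path G sigma -> uniformly_cofinal (Psi G).
Proof.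
  intros [HPsi [pmin [pmax [Hmin [Hmax Hb]]]]].
  destruct (Kinf_inverse pmin Hmin) as [h [Hh Hhp]].
  exists (fun t => pmax (h t)); split; [apply Kinf_comp; auto|].
  intros s Hs. assert (Hn0 : 0 <= linf_norm s) by (apply linf_norm_nonneg; auto; apply Hs).
  destruct (Hhp _ Hn0) as [Hr Hgr]. set (r := h (linf_norm s)) in *.
  exists (sigma r). destruct (Hb r Hr) as [Hlo Hhi]. split; [apply HPsi; auto|split].
  - intros i. eapply Rle_trans; [|apply Hlo]. unfold vscale, ones. rewrite Hgr, Rmult_1_r.
    eapply Rle_trans; [apply Rle_abs|]. apply linf_norm_ge; auto. apply Hs.
  - apply linf_norm_le; auto. intros i. specialize (Hlo i). specialize (Hhi i).
    unfold vscale, ones in *. rewrite Rmult_1_r in *.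
    assert (0 <= pmin r) by (apply Kinf_nonneg; auto).
    rewrite Rabs_pos_eq; lra.
Qed.
Lemma gamma_unif_bound {I : Type} Ii gamma mu (Hg : @gain_operator_data I Ii gamma mu) r :
  0 <= r -> exists B, forall i j, In j (Ii i) -> gamma i j r <= B.
Proof.
  pose proof Hg as [_ [HK [Heq _]]].
  set (P := fun t => exists B, forall i j, In j (Ii i) -> gamma i j t <= B).
  assert (Hmon : forall t1 t2, 0 <= t1 -> t1 <= t2 -> P t2 -> P t1).
  { intros t1 t2 H1 H2 [B HB]. exists B. intros i j Hj. eapply Rle_trans; [|apply (HB i j Hj)].
    apply Kinf_mono; auto. }
  assert (Hnb : forall t, 0 <= t -> exists d, 0 < d /\ forall t', 0 <= t' -> Rabs (t' - t) < d ->
     (P t <-> P t')).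
  { intros t Ht. destruct (Heq t Ht 1 ltac:(lra)) as [d [Hd Hc]]. exists d; split; auto.
    intros t' Ht' Htt. split; intros [B HB]; exists (B + 1); intros i j Hj;
      specialize (Hc i j t' Hj Ht' Htt); apply Rabs_def2 in Hc; specialize (HB i j Hj); lra. }
  intros Hr. apply NNPP. intros HnP. fold (P r) in HnP.
  set (E := fun t => 0 <= t /\ P t).
  assert (Hb : bound E).
  { exists r. intros t [Ht HPt]. destruct (Rle_dec t r) as [|Hn]; auto. exfalso.
    apply HnP. apply (Hmon r t); auto; lra. }
  assert (He : E 0).
  { split; [lra|]. exists 0. intros i j Hj. destruct (HK i j Hj) as [[_ [H0 _]] _]. lra. }
  destruct (completeness E Hb (ex_intro _ 0 He)) as [m [Hub Hlub]].
  assert (Hm0 : 0 <= m) by (apply Hub; auto).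
  destruct (Hnb m Hm0) as [d [Hd Hc]].
  assert (Ht : exists t, E t /\ m - d < t).
  { apply NNPP. intros Hn. assert (m <= m - d); [|lra]. apply Hlub. intros t Et.
    destruct (Rle_dec t (m - d)) as [|Hn']; auto. exfalso. apply Hn. exists t; split; auto; lra. }
  destruct Ht as [t [[Ht0 HPt] Htm]]. assert (t <= m) by (apply Hub; split; auto).
  assert (HPm : P m) by (apply (proj2 (Hc t Ht0 ltac:(rewrite Rabs_left1; lra))); auto).
  assert (HE2 : E (m + d/2)).
  { split; [lra|]. apply (Hc (m + d/2)); auto; [lra|]. rewrite Rabs_pos_eq; lra. }
  assert (m + d/2 <= m) by (apply Hub; auto). lra.
Qed.

Lemma restrict_idem {I : Type} (J : list I) f : restrict J (restrict J f) = restrict J f.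
Proof. apply functional_extensionality; intros j. unfold restrict.
  destruct (excluded_middle_informative (In j J)); auto. Qed.

Lemma G_bounded {I : Type} (HI : inhabited I) Ii gamma mu (Hg : @gain_operator_data I Ii gamma mu) s :
  linf_pos s -> linf (Gamma_op Ii gamma mu s).
Proof.
  intros [Hs0 [Cs HCs]]. set (Cs' := Rmax Cs 0).
  assert (HCs' : 0 <= Cs') by apply Rmax_r.
  assert (Hsj : forall j, s j <= Cs').
  { intros j. specialize (HCs j). pose proof (Rle_abs (s j)). pose proof (Rmax_l Cs 0). unfold Cs'; lra. }
  destruct (gamma_unif_bound Ii gamma mu Hg Cs' HCs') as [B0 HB0]. set (B := Rmax B0 0).
  assert (HB : 0 <= B) by apply Rmax_r.
  pose proof Hg as [_ [HK [_ [_ [[xi [Hxi HM1]] [_ [_ HM4]]]]]]].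
  set (A := fun v : I -> R => (forall j, 0 <= v j) /\ forall j, v j <= B).
  assert (HApos : forall v, A v -> linf_pos v).
  { intros v [H1 H2]; split; auto. exists B; intros j; rewrite Rabs_pos_eq; auto. }
  assert (HAn : exists C, forall v, A v -> linf_norm v <= C).
  { exists B. intros v [H1 H2]. apply linf_norm_le; auto. intros j; rewrite Rabs_pos_eq; auto. }
  destruct (HM4 A HApos HAn 1 ltac:(lra)) as [d [Hd HM4d]].
  destruct (INR_archimed d B Hd) as [n Hn]. set (N := S n).
  assert (HN : B < INR N * d). { unfold N. rewrite S_INR. lra. }
  assert (HN0 : 0 < INR N) by (unfold N; rewrite S_INR; pose proof (pos_INR n); lra).
  exists (INR N). intros i.
  set (v := Yv Ii gamma i s).
  assert (Hv0 : forall j, 0 <= v j) by (apply (Y_pos Ii gamma mu Hg i s Hs0)).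
  assert (HvB : forall j, v j <= B).
  { intros j. unfold v, Yv, restrict. destruct (excluded_middle_informative _) as [Hin|]; [|auto].
    eapply Rle_trans; [|apply Rmax_l]. eapply Rle_trans; [|apply (HB0 i j Hin)].
    apply Kinf_mono; auto. }
  set (vk := fun (k : nat) j => INR k * (v j / INR N)).
  assert (Hw0 : forall j, 0 <= v j / INR N) by (intros j; apply Rdiv_le_0_compat; auto).
  assert (HwB : forall j, v j / INR N <= B / INR N).
  { intros j. apply Rmult_le_compat_r; [left; apply Rinv_0_lt_compat; auto| auto]. }
  assert (HBN : B / INR N < d).
  { apply Rmult_lt_reg_r with (INR N); auto. unfold Rdiv. rewrite Rmult_assoc, Rinv_l; lra. }
  assert (Hvk : forall k, (k <= N)%nat -> A (vk k)).
  { intros k Hk. split; intros j; unfold vk.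
    - apply Rmult_le_pos; auto. apply pos_INR.
    - assert (INR k <= INR N) by (apply le_INR; auto).
      apply Rle_trans with (INR N * (v j / INR N)).
      + apply Rmult_le_compat_r; auto.
      + unfold Rdiv. rewrite <- Rmult_assoc, (Rmult_comm (INR N)), Rmult_assoc, Rinv_r; [|lra]. rewrite Rmult_1_r; auto. }
  assert (Hind : forall k, (k <= N)%nat -> real (mu i (restrict (Ii i) (vk k))) <= INR k).
  { induction k; intros Hk.
    - assert (restrict (Ii i) (vk 0%nat) = vzero).
      { apply functional_extensionality; intros j. unfold restrict, vk, vzero. simpl.
        destruct (excluded_middle_informative _); lra. }
      rewrite H. destruct (HM1 i) as [-> _]. simpl; lra.
    - assert (IH := IHk ltac:(lia)).
      assert (Hd' := HM4d (vk k) (vk (S k)) (Hvk k ltac:(lia)) (HApos _ (Hvk (S k) Hk))).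
      assert (Hdiff : linf_norm (vsub (vk (S k)) (vk k)) <= d).
      { apply linf_norm_le; auto. intros j. unfold vsub, vk. rewrite S_INR.
        replace ((INR k + 1) * (v j / INR N) - INR k * (v j / INR N)) with (v j / INR N) by ring.
        rewrite Rabs_pos_eq; auto. specialize (HwB j); lra. }
      specialize (Hd' Hdiff i). apply Rabs_le_between in Hd'. rewrite S_INR. lra. }
  assert (HvN : vk N = v).
  { apply functional_extensionality; intros j. unfold vk. field. lra. }
  specialize (Hind N (le_n N)). rewrite HvN in Hind. unfold v, Yv in Hind. rewrite restrict_idem in Hind.
  pose proof (G_nonneg Ii gamma mu Hg s i Hs0).
  rewrite Rabs_pos_eq; auto.
Qed.

Lemma Ghat_linf {I : Type} (HI : inhabited I) Ii gamma mu (Hg : @gain_operator_data I Ii gamma mu) s :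
  linf_pos s -> linf_pos (Gamma_hat Ii gamma mu s).
Proof.
  intros Hs. destruct (G_bounded HI Ii gamma mu Hg s Hs) as [C HC]. destruct Hs as [Hs0 [Cs HCs]].
  split.
  - intros i. eapply Rle_trans; [apply Hs0|apply Ghat_ge].
  - exists (Rmax Cs C). intros i. unfold Gamma_hat, vmax.
    pose proof (G_nonneg Ii gamma mu Hg s i Hs0). specialize (Hs0 i). specialize (HCs i). specialize (HC i).
    rewrite Rabs_pos_eq by (eapply Rle_trans; [apply Hs0|apply Rmax_l]).
    rewrite Rabs_pos_eq in HCs, HC by auto.
    apply Rmax_lub; [eapply Rle_trans; [apply HCs|apply Rmax_l]|eapply Rle_trans; [apply HC|apply Rmax_r]].
Qed.
Lemma G_cont_seq {I : Type} (HI : inhabited I) Ii gamma mu (Hg : @gain_operator_data I Ii gamma mu)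
  i (sg : I -> R) (x : nat -> I -> R) :
  (forall j, 0 <= sg j) -> (forall n j, 0 <= x n j) ->
  (forall j d, 0 < d -> exists N, forall m, (N <= m)%nat -> Rabs (x m j - sg j) < d) ->
  forall eps, 0 < eps -> exists n, Rabs (Gamma_op Ii gamma mu (x n) i - Gamma_op Ii gamma mu sg i) < eps.
Proof.
  intros Hsg Hx Hconv eps Heps.
  pose proof Hg as [_ [HK [_ [_ [_ [_ [HM3 _]]]]]]].
  destruct (HM3 i (Ii i)) as [_ Hc].
  destruct (Hc _ (Y_pos Ii gamma mu Hg i sg Hsg) (Y_van Ii gamma i sg) eps Heps) as [d [Hd Hcd]].
  destruct (finite_list_N (Ii i) (fun j m => Rabs (gamma i j (x m j) - gamma i j (sg j)) < d/2)) as [N HN].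
  { intros j Hj. destruct (HK i j Hj) as [[Hcg _] _].
    destruct (Hcg (sg j) (Hsg j) (d/2) ltac:(lra)) as [dj [Hdj Hcj]].
    destruct (Hconv j dj Hdj) as [Nj HNj]. exists Nj. intros m Hm. apply Hcj; auto. }
  exists N. apply (Hcd _ (Y_pos Ii gamma mu Hg i (x N) (Hx N)) (Y_van Ii gamma i (x N))).
  apply Rle_lt_trans with (d/2); [|lra]. apply linf_norm_le; auto.
  intros j. unfold vsub, Yv, restrict. destruct (excluded_middle_informative _) as [Hin|].
  - left; apply HN; auto.
  - rewrite Rminus_0_r, Rabs_R0; lra.
Qed.

Lemma id_Kinf : class_Kinf (fun r => r).
Proof.
  split; [split; [|split]|].
  - intros r Hr eps Heps. exists eps; split; auto.
  - reflexivity.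
  - intros; lra.
  - intros M. exists (Rmax M 0 + 1). pose proof (Rmax_l M 0); pose proof (Rmax_r M 0). split; lra.
Qed.

Lemma a_to_b {I : Type} (HI : inhabited I) Ii gamma mu (Hg : @gain_operator_data I Ii gamma mu) :
  UGS (Gamma_hat Ii gamma mu) ->
  exists sigma, bounded_decay_path (Gamma_op Ii gamma mu) sigma /\ increasing_path sigma.
Proof.
  intros [phi [Hphi HU]].
  set (T := Gamma_hat Ii gamma mu). set (G := Gamma_op Ii gamma mu).
  set (x := fun (n : nat) (r : R) => Nat.iter n T (vscale r ones)).
  assert (H1 : forall r, 0 <= r -> linf_pos (vscale r (@ones I))).
  { intros r Hr. split; [intros i; unfold vscale, ones; lra|]. exists r; intros i; unfold vscale, ones.
    rewrite Rmult_1_r, Rabs_pos_eq; lra. }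
  assert (Hxpos : forall r n, 0 <= r -> linf_pos (x n r)).
  { intros r n Hr. induction n; simpl; auto. apply Ghat_linf; auto. }
  assert (Hxr : forall r n i, r <= x n r i).
  { intros r n i. eapply Rle_trans; [|apply (iter_Ghat_ge Ii gamma mu (vscale r ones) n i)].
    unfold vscale, ones; lra. }
  assert (Hxphi : forall r n i, 0 <= r -> x n r i <= phi r).
  { intros r n i Hr. pose proof (HU _ (H1 r Hr) n) as H. rewrite linf_norm_const in H; auto.
    eapply Rle_trans; [|apply H]. eapply Rle_trans; [apply Rle_abs|]. apply linf_norm_ge; auto.
    apply Hxpos; auto. }
  assert (HxS : forall r n i, x n r i <= x (S n) r i).
  { intros r n i. apply Ghat_ge. }
  assert (Hxm : forall r n m i, (n <= m)%nat -> x n r i <= x m r i).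
  { intros r n m i Hnm. induction Hnm; [lra|]. eapply Rle_trans; [apply IHHnm|apply HxS]. }
  assert (HxG : forall r n i, G (x n r) i <= x (S n) r i).
  { intros r n i. simpl. unfold T at 1, Gamma_hat, vmax. apply Rmax_r. }
  assert (Hxinc : forall r1 r2 n, 0 <= r1 -> r1 <= r2 -> vle (x n r1) (x n r2)).
  { intros r1 r2 n H0 H12. induction n; simpl.
    - intros i; unfold vscale, ones; lra.
    - apply Ghat_mono; auto. apply Hxpos; auto. }
  set (sg := fun r i => real (Lub_Rbar (fun v => exists n, v = x n r i))).
  assert (Hsg : forall r i, 0 <= r ->
     (forall n, x n r i <= sg r i) /\ (forall b, (forall n, x n r i <= b) -> sg r i <= b)).
  { intros r i Hr. destruct (lub_props (fun v => exists n, v = x n r i) (x O r i) (phi r)) as [A B].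
    - eauto.
    - intros v [n ->]; auto.
    - split. + intros n; apply A; eauto. + intros b Hb; apply B. intros v [n ->]; auto. }
  assert (Hconv : forall r j d, 0 <= r -> 0 < d -> exists N, forall m, (N <= m)%nat -> Rabs (x m r j - sg r j) < d).
  { intros r j d Hr Hd. destruct (Hsg r j Hr) as [A B].
    assert (Hex : exists N, sg r j - d < x N r j).
    { apply NNPP; intros Hn. assert (sg r j <= sg r j - d); [|lra]. apply B. intros n.
      destruct (Rlt_dec (sg r j - d) (x n r j)) as [Hl|Hl]; [exfalso; eauto|lra]. }
    destruct Hex as [N HN]. exists N. intros m Hm. pose proof (Hxm r N m j Hm). pose proof (A m).
    apply Rabs_def1; lra. }
  exists sg. split; [split|].
  - intros r Hr. assert (Hsg0 : forall j, 0 <= sg r j).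
    { intros j. destruct (Hsg r j Hr) as [A _]. specialize (A O). specialize (Hxr r O j). lra. }
    split.
    + split; auto. exists (phi r). intros j. rewrite Rabs_pos_eq; auto.
      destruct (Hsg r j Hr) as [_ B]. apply B. intros n; auto.
    + intros i. destruct (Rle_dec (G (sg r) i) (sg r i)) as [|Hn]; auto. exfalso.
      destruct (G_cont_seq HI Ii gamma mu Hg i (sg r) (fun n => x n r) Hsg0
        (fun n j => proj1 (Hxpos r n Hr) j) (fun j d Hd => Hconv r j d Hr Hd)
        (G (sg r) i - sg r i) ltac:(lra)) as [n Hn'].
      apply Rabs_def2 in Hn'. fold G in Hn'. pose proof (HxG r n i). destruct (Hsg r i Hr) as [A _].
      specialize (A (S n)). lra.
  - exists (fun r => r), phi. split; [apply id_Kinf|split; auto].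
    intros r Hr. split; intros i; unfold vscale, ones; rewrite Rmult_1_r; destruct (Hsg r i Hr) as [A B].
    + specialize (A O). specialize (Hxr r O i). lra.
    + apply B. intros n; auto.
  - intros r1 r2 H1' H12 i. destruct (Hsg r1 i H1') as [_ B]. apply B. intros n.
    destruct (Hsg r2 i ltac:(lra)) as [A _]. eapply Rle_trans; [apply (Hxinc r1 r2 n H1' H12 i)|apply A].
Qed.

Theorem proposition2p13 (I : Type) (HIc : countable_index I) (HIne : inhabited I)
    (Ii : I -> list I) (gamma : I -> I -> R -> R) (mu : I -> (I -> R) -> Rbar)
    (Hgain : gain_operator_data Ii gamma mu) :
  let G := Gamma_op Ii gamma mu in
  let Ghat := Gamma_hat Ii gamma mu in
  (UGS Ghat <->
     exists sigma : R -> I -> R, bounded_decay_path G sigma /\ increasing_path sigma) /\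
  (UGS Ghat <-> exists sigma : R -> I -> R, bounded_decay_path G sigma) /\
  (UGS Ghat <-> uniformly_cofinal (Psi G)).
Proof.
  intros G Ghat.
  assert (AB := a_to_b HIne Ii gamma mu Hgain).
  assert (DA := d_to_a HIne Ii gamma mu Hgain).
  assert (CD : forall sigma, bounded_decay_path G sigma -> uniformly_cofinal (Psi G))
    by (intros sigma; apply c_to_d; auto).
  split; [|split]; split.
  - exact AB.
  - intros [sigma [Hs _]]. apply DA, (CD sigma Hs).
  - intros H. destruct (AB H) as [sigma [Hs _]]. eauto.
  - intros [sigma Hs]. apply DA, (CD sigma Hs).
  - intros H. destruct (AB H) as [sigma [Hs _]]. eauto.
  - exact DA.
Qed.
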